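(* Let $q$ be real with $0<q<1$ and consider the limit $q\to1-0$. (i) If $\mathbf{k}$ is an admissible index, then $\lim_{q \to 1-0}Z_{q}(g_{\mathbf{k}})=\zeta(\mathbf{k})$. (ii) For any $w \in \mathfrak{n}$, $\lim_{q \to 1-0}Z_{q}(w)=0$.
   Context: Indices: an index is a finite (possibly empty) tuple $\mathbf k=(k_1,\dots,k_r)$ of positive integers; admissible if empty or $k_r\ge2$. For admissible non-empty $\mathbf k$, $\zeta(\mathbf k)=\sum_{0<m_1<\cdots<m_r}m_1^{-k_1}\cdots m_r^{-k_r}$, and $\zeta(\varnothing)=1$. Let $\mathcal{C}=\mathbb{Q}[\hbar]$ ($\hbar$ formal), $\mathfrak{H}=\mathcal{C}\langle a,b\rangle$. For $k\ge1$, $g_k=ba^k$; $g_{\mathbf k}=g_{k_1}\cdots g_{k_r}$, $g_\varnothing=1$. $A=\{\hbar b\}\cup\{ba^k\mid k\ge1\}$, $\mathcal{C}\langle A\rangle$ the $\mathcal{C}$-subalgebra generated by $1$ and $A$, $\mathfrak z$ the $\mathcal C$-span of $A$, $\widehat{\mathfrak H^0}=\mathcal C+\sum_{k\ge1}\mathcal C\langle A\rangle g_k$. For $0<q<1$, $\mathbb{C}$ is a $\mathcal{C}$-module with $\hbar$ acting by $1-q$; $[m]=(1-q^m)/(1-q)$; $F_q(m;\cdot):\mathfrak{z}\to\mathbb{C}$ is $\mathcal{C}$-linear with $F_q(m;\hbar b)=1-q$, $F_q(m;g_k)=q^{km}/[m]^k$; $Z_{q,M}$ is $\mathcal{C}$-linear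 on $\mathcal C\langle A\rangle$ with $Z_{q,M}(1)=1$, $Z_{q,M}(u_1\cdots u_r)=\sum_{0<m_1<\cdots<m_r<M}\prod_i F_q(m_i;u_i)$ ($u_i\in A$); $Z_q(w)=\lim_{M\to\infty}Z_{q,M}(w)$ for $w\in\widehat{\mathfrak H^0}$. Let $\mathfrak n_0$ be the $\mathcal C$-span of the elements $(\hbar b)^{\alpha_1}g_{\beta_1+1}\cdots(\hbar b)^{\alpha_r}g_{\beta_r+1}$ with $r\ge1$, $\alpha_i,\beta_i\ge0$, such that $\alpha_s\ge1$ and $\beta_t\ge1$ for some $1\le s\le t\le r$; and $\mathfrak n=\mathfrak n_0+\hbar\widehat{\mathfrak H^0}$ (where $\hbar$ acts on values as $1-q$). *)

(* Defs.v *)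
From Stdlib Require Import Reals QArith Qreals List Arith.
From Coquelicot Require Import Coquelicot.
Import ListNotations.
Open Scope R_scope.

(** Letters of the alphabet A = {hbar b} U {g_k = b a^k | k >= 1}.
    [Hb] stands for hbar*b and [G k] for g_k; only [G k] with k >= 1 is a
    letter of A (see [valid_letter]). *)
Inductive letter : Type := Hb | G (k : nat).

Definition valid_letter (u : letter) : Prop :=
  match u with Hb => True | G k => (1 <= k)%nat end.

Definition word := list letter.

(** Elements of C = Q[hbar]: coefficient lists (lowest degree first). *)
Definition cpoly := list Q.

Fixpoint peval (c : cpoly) (x : R) : R :=
  match c with [] => 0 | a :: c' => Q2R a + x * peval c' x end.

Definition cone : cpoly := [1%Q].
Definition hbar_mul (c : cpoly) : cpoly := 0%Q :: c.

(** Elements of C<A> as formal C-linear combinations of A-words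
    (the A-words form a C-basis of C<A>). *)
Definition elt := list (cpoly * word).

Definition qnum (q : R) (m : nat) : R := (1 - q ^ m) / (1 - q).

Definition Fq (q : R) (m : nat) (u : letter) : R :=
  match u with
  | Hb => 1 - q
  | G k => q ^ (k * m) / (qnum q m) ^ k
  end.

Fixpoint rsum (f : nat -> R) (n : nat) : R :=
  match n with O => 0 | S n' => rsum f n' + f n' end.

(** nest f M [u_r; ...; u_1] = sum_{0<m_1<...<m_r<M} prod_i f m_i u_i
    (the list is given in reversed order). *)
Fixpoint nest {A : Type} (f : nat -> A -> R) (M : nat) (rl : list A) : R :=
  match rl with
  | [] => 1
  | u :: rl' => rsum (fun i => f (S i) u * nest f (S i) rl') (pred M)
  end.

Definition ZqM_word (q : R) (M : nat) (w : word) : R := nest (Fq q) M (rev w).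

Definition ZqM (q : R) (M : nat) (s : elt) : R :=
  fold_right (fun p acc => peval (fst p) (1 - q) * ZqM_word q M (snd p) + acc) 0 s.

Definition Zq (q : R) (s : elt) : R := real (Lim_seq (fun M => ZqM q M s)).

Definition gk (ks : list nat) : elt := [(cone, map G ks)].

Definition zetaM (M : nat) (ks : list nat) : R :=
  nest (fun (m k : nat) => Rinv (INR m ^ k)) M (rev ks).
Definition zeta (ks : list nat) : R := real (Lim_seq (fun M => zetaM M ks)).

Definition admissible (ks : list nat) : Prop :=
  List.Forall (fun k => (1 <= k)%nat) ks /\ (ks = [] \/ (2 <= last ks 0)%nat).

(** Generators of n_0:
    (hbar b)^a1 g_{b1+1} ... (hbar b)^ar g_{br+1}, r >= 1,
    with a_s >= 1 and b_t >= 1 for some 1 <= s <= t <= r. *)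
Definition block (p : nat * nat) : word := repeat Hb (fst p) ++ [G (S (snd p))].

Definition n0word (w : word) : Prop :=
  exists blocks : list (nat * nat),
    blocks <> [] /\ w = flat_map block blocks /\
    exists s t, (s <= t)%nat /\ (t < length blocks)%nat /\
      (1 <= fst (nth s blocks (0%nat, 0%nat)))%nat /\
      (1 <= snd (nth t blocks (0%nat, 0%nat)))%nat.

(** Words spanning \hat{H^0} = C + sum_{k>=1} C<A> g_k. *)
Definition H0word (w : word) : Prop :=
  List.Forall valid_letter w /\
  (w = [] \/ exists w' k, (1 <= k)%nat /\ w = w' ++ [G k]).

(** The element  s0 + hbar * s1  of n = n_0 + hbar \hat{H^0},
    where s0 is a C-combination of n_0 generators and s1 an element of \hat{H^0}. *)
Definition n_elt (s0 s1 : elt) : elt :=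
  s0 ++ map (fun p => (hbar_mul (fst p), snd p)) s1.

(* Main.v *)
Require Import Defs.
From Stdlib Require Import Reals List.
From Coquelicot Require Import Coquelicot.
From Stdlib Require Import Lra Lia QArith Qreals Factorial ZArith.
Import ListNotations.
Open Scope R_scope.

Lemma rsum_ext f g n : (forall i, (i < n)%nat -> f i = g i) -> rsum f n = rsum g n.
Proof. induction n; simpl; intros H; [lra|]. rewrite IHn by (intros; apply H; lia). rewrite H by lia. lra. Qed.

Lemma rsum_le f g n : (forall i, (i < n)%nat -> f i <= g i) -> rsum f n <= rsum g n.
Proof. induction n; simpl; intros H; [lra|].
 assert (f n <= g n) by (apply H; lia).
 assert (rsum f n <= rsum g n) by (apply IHn; intros; apply H; lia). lra. Qed.

Lemma rsum_nonneg f n : (forall i, (i < n)%nat -> 0 <= f i) -> 0 <= rsum f n.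
Proof. induction n; simpl; intros H; [lra|].
 assert (0 <= f n) by (apply H; lia).
 assert (0 <= rsum f n) by (apply IHn; intros; apply H; lia). lra. Qed.

Lemma rsum_const c n : rsum (fun _ => c) n = INR n * c.
Proof. induction n; simpl rsum; [simpl; lra|]. rewrite IHn, S_INR. ring. Qed.

Lemma rsum_scal c f n : rsum (fun i => c * f i) n = c * rsum f n.
Proof. induction n; simpl; [ring|]. rewrite IHn. ring. Qed.

Lemma rsum_plus f g n : rsum (fun i => f i + g i) n = rsum f n + rsum g n.
Proof. induction n; simpl; [ring|]. rewrite IHn. ring. Qed.

Lemma rsum_mono f n m : (forall i, 0 <= f i) -> (n <= m)%nat -> rsum f n <= rsum f m.
Proof. intros H Hnm. induction Hnm; [lra|]. simpl. specialize (H m). lra. Qed.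

Lemma rsum_shift f n : rsum f (S n) = f 0%nat + rsum (fun i => f (S i)) n.
Proof. induction n; [simpl; ring|]. change (rsum f (S (S n))) with (rsum f (S n) + f (S n)).
 rewrite IHn. simpl. ring. Qed.

Lemma nest_ext {A} (f g : nat -> A -> R) M rl :
  (forall n u, f (S n) u = g (S n) u) -> nest f M rl = nest g M rl.
Proof. intros H; revert M; induction rl as [|u rl IH]; intros M; simpl; auto.
 apply rsum_ext; intros i _. rewrite H, IH. reflexivity. Qed.

Lemma nest_map {A B} (f : nat -> A -> R) (g : B -> A) M rl :
  nest f M (map g rl) = nest (fun m b => f m (g b)) M rl.
Proof. revert M; induction rl as [|u rl IH]; intros M; simpl; auto.
 apply rsum_ext; intros i _. rewrite IH. reflexivity. Qed.

Lemma nest_nonneg {A} (f : nat -> A -> R) rl :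
  (forall n u, 0 <= f (S n) u) -> forall M, 0 <= nest f M rl.
Proof. intros H; induction rl as [|u rl IH]; intros M; simpl; [lra|].
 apply rsum_nonneg; intros i _. apply Rmult_le_pos; auto. Qed.

Lemma nest_mono {A} (f : nat -> A -> R) rl :
  (forall n u, 0 <= f (S n) u) -> forall M M', (M <= M')%nat -> nest f M rl <= nest f M' rl.
Proof. intros H M M' HM; destruct rl as [|u rl]; simpl; [lra|].
 apply rsum_mono; [|lia]. intros i. apply Rmult_le_pos; auto. apply nest_nonneg; auto. Qed.

Lemma nest_le {A} (f g : nat -> A -> R) rl :
  (forall n u, 0 <= f (S n) u <= g (S n) u) -> forall M, nest f M rl <= nest g M rl.
Proof. intros H; induction rl as [|u rl IH]; intros M; simpl; [lra|].
 apply rsum_le; intros i _.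
 assert (0 <= nest f (S i) rl) by (apply nest_nonneg; intros; apply H).
 specialize (H i u).
 specialize (IH (S i)). apply Rmult_le_compat; lra. Qed.

Lemma pow_anti q i n : 0 <= q <= 1 -> (i <= n)%nat -> q ^ n <= q ^ i.
Proof. intros Hq H; induction H; [lra|]. simpl.
 assert (0 <= q ^ m) by (apply pow_le; lra). nra. Qed.

Lemma geom q n : (1 - q) * rsum (pow q) n = 1 - q ^ n.
Proof. induction n; simpl; [ring|]. rewrite Rmult_plus_distr_l, IHn. ring. Qed.

Lemma qnum_rsum q n : q <> 1 -> qnum q n = rsum (pow q) n.
Proof. intros H. unfold qnum. rewrite <- geom. field. lra. Qed.

Definition f1 q n := q ^ n / qnum q n.

Lemma Fq_G q n k : Fq q n (G k) = f1 q n ^ k.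
Proof. unfold Fq, f1. rewrite Nat.mul_comm, pow_mult. unfold Rdiv.
 rewrite Rpow_mult_distr, pow_inv. reflexivity. Qed.

Lemma rsum_pow_ge q n : 0 <= q <= 1 -> INR n * q ^ n <= rsum (pow q) n.
Proof. intros Hq. rewrite <- rsum_const. apply rsum_le. intros i Hi. apply pow_anti; auto; lia. Qed.

Lemma rsum_pow_ge1 q n : 0 <= q -> (1 <= n)%nat -> 1 <= rsum (pow q) n.
Proof. intros Hq Hn. destruct n; [lia|]. rewrite rsum_shift. simpl pow at 1.
 assert (0 <= rsum (fun i => q ^ S i) n) by (apply rsum_nonneg; intros; apply pow_le; auto). lra. Qed.

Lemma bern x N : 0 <= x <= 1 -> (1 - x) ^ N * (1 + INR N * x) <= 1.
Proof. intros Hx. induction N; [simpl; lra|]. rewrite S_INR. cbn [pow].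
 assert (0 <= (1-x)^N) by (apply pow_le; lra).
 assert (0 <= INR N) by apply pos_INR.
 assert (0 <= INR N * x) by nra.
 assert ((1-x)^N <= 1) by nra.
 assert (0 <= x * (1-x)) by nra.
 nra. Qed.

Section Q.
Variable q : R.
Hypothesis hq : 0 < q < 1.
Let x := 1 - q.

Lemma x_pos : 0 < x. Proof. unfold x; lra. Qed.

Lemma f1_nonneg n : (1 <= n)%nat -> 0 <= f1 q n.
Proof. intros Hn. unfold f1. rewrite qnum_rsum by lra.
 assert (1 <= rsum (pow q) n) by (apply rsum_pow_ge1; lia || lra).
 apply Rmult_le_pos; [apply pow_le; lra|]. left; apply Rinv_0_lt_compat; lra. Qed.

Lemma f1_le_inv n : (1 <= n)%nat -> f1 q n <= / INR n.
Proof. intros Hn. unfold f1. rewrite qnum_rsum by lra.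
 assert (Hs : INR n * q ^ n <= rsum (pow q) n) by (apply rsum_pow_ge; lra).
 assert (0 < q ^ n) by (apply pow_lt; lra).
 assert (1 <= INR n) by (apply (le_INR 1); auto).
 apply Rle_trans with (q ^ n / (INR n * q ^ n)).
 - unfold Rdiv. apply Rmult_le_compat_l; [lra|]. apply Rinv_le_contravar; nra.
 - right. field. lra. Qed.

Lemma f1_le1 n : (1 <= n)%nat -> f1 q n <= 1.
Proof. intros Hn. eapply Rle_trans; [apply f1_le_inv; auto|].
 assert (1 <= INR n) by (apply (le_INR 1); auto).
 rewrite <- Rinv_1. apply Rinv_le_contravar; lra. Qed.

Lemma f1_pow_le n k : (1 <= n)%nat -> (1 <= k)%nat -> f1 q n ^ k <= f1 q n.
Proof. intros Hn Hk. destruct k; [lia|]. simpl.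
 assert (0 <= f1 q n) by (apply f1_nonneg; auto).
 assert (f1 q n <= 1) by (apply f1_le1; auto).
 assert (f1 q n ^ k <= f1 q n ^ 0) by (apply pow_anti; lia || lra). simpl in *. nra. Qed.

Lemma f1_pow_le2 n k : (1 <= n)%nat -> (2 <= k)%nat -> f1 q n ^ k <= f1 q n ^ 2.
Proof. intros Hn Hk. apply pow_anti; [|lia].
 split; [apply f1_nonneg; auto| apply f1_le1; auto]. Qed.

Lemma f1_large N n : 1 <= x * INR N -> (1 <= n)%nat -> (N <= n)%nat -> f1 q n <= 2 * x * q ^ n.
Proof. intros HN Hn Hnn.
 assert (q ^ n <= q ^ N) by (apply pow_anti; lia || lra).
 assert (HB := bern x N). unfold x in *. replace (1 - (1 - q)) with q in HB by ring.
 assert (0 < q ^ N) by (apply pow_lt; lra).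
 assert (0 < q ^ n) by (apply pow_lt; lra).
 assert (q ^ N <= / 2).
 { assert (q ^ N * (1 + INR N * (1 - q)) <= 1) by (apply HB; lra).
   apply Rmult_le_reg_r with 2; [lra|]. rewrite Rinv_l by lra. nra. }
 unfold f1, qnum. 
 replace (q ^ n / ((1 - q ^ n) / (1 - q))) with ((1-q) * q ^ n / (1 - q ^ n)) by (field; split; lra).
 apply Rmult_le_reg_r with (1 - q ^ n); [lra|]. unfold Rdiv. rewrite Rmult_assoc, Rinv_l by lra.
 assert (0 <= (1-q) * q ^ n) by (apply Rmult_le_pos; lra). nra. Qed.

Lemma Fq_nonneg n u : 0 <= Fq q (S n) u.
Proof. destruct u.
 - simpl; lra.
 - rewrite Fq_G. apply pow_le. apply f1_nonneg. lia. Qed.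
End Q.

Lemma pow_diff y z b : 0 <= z <= y -> y ^ (S b) - z ^ (S b) <= INR (S b) * y ^ b * (y - z).
Proof. intros Hz. induction b.
 - simpl. lra.
 - change (y ^ S (S b)) with (y * y ^ S b). change (z ^ S (S b)) with (z * z ^ S b).
   assert (z ^ S b <= y ^ S b) by (apply pow_incr; lra).
   rewrite (S_INR (S b)).
   assert (0 <= y - z) by lra.
   assert (0 <= y) by lra.
   replace (y * y ^ S b - z * z ^ S b) with (y * (y ^ S b - z ^ S b) + z ^ S b * (y - z)) by ring.
   change (y ^ S b) with (y * y ^ b).
   assert (y * (y ^ S b - z ^ S b) <= y * (INR (S b) * y ^ b * (y - z))) by (apply Rmult_le_compat_l; auto).
   assert (z ^ S b * (y - z) <= y ^ S b * (y - z)) by (apply Rmult_le_compat_r; auto).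
   simpl in *. nra. Qed.

Lemma INR_pred n : INR (pred n) <= INR n /\ INR n - INR (pred n) <= 1.
Proof. destruct n; simpl pred; [simpl; lra|]. rewrite S_INR. lra. Qed.

Section Q.
Variable q : R.
Hypothesis hq : 0 < q < 1.
Let x := 1 - q.
Variable N : nat.
Hypothesis hN : 1 <= x * INR N <= 2.

Definition U c M := rsum (fun n => INR n ^ c * q ^ n) M.

Lemma U_ident c M : x * U (S c) (S M) + q ^ (S M) * INR M ^ (S c) =
  rsum (fun n => (INR n ^ (S c) - INR (pred n) ^ (S c)) * q ^ n) (S M).
Proof. unfold U. induction M.
 - simpl. ring.
 - change (rsum (fun n => INR n ^ S c * q ^ n) (S (S M))) with
     (rsum (fun n => INR n ^ S c * q ^ n) (S M) + INR (S M) ^ S c * q ^ (S M)).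
   change (rsum (fun n => (INR n ^ S c - INR (pred n) ^ S c) * q ^ n) (S (S M))) with
     (rsum (fun n => (INR n ^ S c - INR (pred n) ^ S c) * q ^ n) (S M) +
      (INR (S M) ^ S c - INR (pred (S M)) ^ S c) * q ^ (S M)).
   rewrite <- IHM. simpl pred. unfold x. change (q ^ S (S M)) with (q * q ^ S M). ring. Qed.

Lemma U_step b M : x * U (S b) M <= INR (S b) * U b M.
Proof. destruct M as [|M].
 - unfold U; simpl. lra.
 - assert (H := U_ident b M).
   assert (0 <= q ^ S M * INR M ^ S b) by (apply Rmult_le_pos; apply pow_le; [lra|apply pos_INR]).
   apply Rle_trans with (rsum (fun n => (INR n ^ S b - INR (pred n) ^ S b) * q ^ n) (S M)); [lra|].
   unfold U. rewrite <- rsum_scal. apply rsum_le. intros i _.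
   destruct (INR_pred i) as [H1 H2].
   assert (0 <= INR (pred i)) by apply pos_INR.
   assert (Hd := pow_diff (INR i) (INR (pred i)) b ltac:(lra)).
   assert (0 <= q ^ i) by (apply pow_le; lra).
   assert (0 <= INR (S b) * INR i ^ b) by (apply Rmult_le_pos; [apply pos_INR|apply pow_le, pos_INR]).
   assert (INR (S b) * INR i ^ b * (INR i - INR (pred i)) <= INR (S b) * INR i ^ b) by nra.
   nra. Qed.

Lemma T_bound b M : x ^ (S b) * U b M <= INR (fact b).
Proof. revert M; induction b; intros M.
 - unfold U. simpl. rewrite Rmult_1_r.
   rewrite (rsum_ext _ (pow q)) by (intros; ring). fold x.
   unfold x. rewrite geom. assert (0 <= q ^ M) by (apply pow_le; lra). lra.
 - change (x ^ S (S b)) with (x * x ^ S b).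
   assert (H1 := U_step b M). assert (H2 := IHb M).
   assert (0 < x ^ S b) by (apply pow_lt; unfold x; lra).
   change (fact (S b)) with (S b * fact b)%nat. rewrite mult_INR.
   assert (0 <= INR (S b)) by apply pos_INR.
   replace (x * x ^ S b * U (S b) M) with (x ^ S b * (x * U (S b) M)) by ring.
   apply Rle_trans with (x ^ S b * (INR (S b) * U b M)); [apply Rmult_le_compat_l; lra|].
   replace (x ^ S b * (INR (S b) * U b M)) with (INR (S b) * (x ^ S b * U b M)) by ring.
   apply Rmult_le_compat_l; lra. Qed.

Lemma T_shift b K : rsum (fun i => x * q ^ (S i) * (x * INR (S i)) ^ b) K <= INR (fact b).
Proof. rewrite (rsum_ext _ (fun i => x ^ (S b) * (INR (S i) ^ b * q ^ (S i)))).
 2:{ intros i _. rewrite Rpow_mult_distr. simpl. ring. }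
 rewrite rsum_scal. eapply Rle_trans; [|apply (T_bound b (S K))].
 apply Rmult_le_compat_l; [apply pow_le; unfold x; lra|].
 unfold U. rewrite rsum_shift.
 assert (0 <= INR 0 ^ b * q ^ 0) by (apply Rmult_le_pos; apply pow_le; [apply pos_INR|lra]). lra. Qed.

Definition Hs := rsum (fun i => / INR (S i)) N.
Definition hh n := if (n <=? N)%nat then / INR n else 0.

Lemma H_nonneg : 0 <= Hs.
Proof. apply rsum_nonneg. intros; left; apply Rinv_0_lt_compat, lt_0_INR; lia. Qed.

Lemma sum_hh K : rsum (fun i => hh (S i)) K <= Hs.
Proof. assert (E : rsum (fun i => hh (S i)) K = rsum (fun i => / INR (S i)) (min K N)).
 { induction K; [reflexivity|]. simpl rsum at 1. rewrite IHK. unfold hh.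
   destruct (Nat.leb_spec (S K) N).
   - rewrite Nat.min_l by lia. rewrite Nat.min_l by lia. reflexivity.
   - rewrite Nat.min_r by lia. rewrite Nat.min_r by lia. ring. }
 rewrite E. unfold Hs. apply rsum_mono; [|lia]. intros; left; apply Rinv_0_lt_compat, lt_0_INR; lia. Qed.

Lemma PT n b : (1 <= n)%nat ->
  f1 q n * (x * INR n) ^ b <= 2 ^ b * hh n + 2 * (x * q ^ n * (x * INR n) ^ b).
Proof. intros Hn.
 assert (0 <= (x * INR n) ^ b) by (apply pow_le; apply Rmult_le_pos; [unfold x; lra|apply pos_INR]).
 assert (0 <= x * q ^ n) by (apply Rmult_le_pos; [unfold x; lra|apply pow_le; lra]).
 assert (0 <= f1 q n) by (apply f1_nonneg; auto).
 unfold hh. destruct (Nat.leb_spec n N) as [HnN|HnN].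
 - assert (f1 q n <= / INR n) by (apply f1_le_inv; auto).
   assert ((x * INR n) ^ b <= 2 ^ b).
   { apply pow_incr. split. apply Rmult_le_pos; [unfold x; lra|apply pos_INR].
     apply le_INR in HnN. assert (0 < x) by (unfold x; lra). nra. }
   assert (f1 q n * (x * INR n) ^ b <= / INR n * 2 ^ b) by (apply Rmult_le_compat; lra).
   assert (0 <= x * q ^ n * (x * INR n) ^ b) by (apply Rmult_le_pos; lra). lra.
 - assert (f1 q n <= 2 * x * q ^ n) by (apply (f1_large q hq N); unfold x in *; lra || lia).
   assert (f1 q n * (x * INR n) ^ b <= 2 * x * q ^ n * (x * INR n) ^ b) by (apply Rmult_le_compat_r; lra).
   lra. Qed.

Definition E b := 2 ^ b * Hs + 2 * INR (fact b).

Lemma E_nonneg b : 0 <= E b.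
Proof. unfold E. assert (0 <= Hs) by apply H_nonneg. assert (0 < 2 ^ b) by (apply pow_lt; lra).
 assert (0 < INR (fact b)) by apply INR_fact_lt_0. nra. Qed.

Lemma sumPT b K : rsum (fun i => f1 q (S i) * (x * INR (S i)) ^ b) K <= E b.
Proof. eapply Rle_trans.
 { apply rsum_le. intros i _. apply (PT (S i) b). lia. }
 rewrite rsum_plus, rsum_scal, rsum_scal. unfold E.
 assert (rsum (fun i => hh (S i)) K <= Hs) by apply sum_hh.
 assert (rsum (fun i => x * q ^ S i * (x * INR (S i)) ^ b) K <= INR (fact b)) by apply T_shift.
 assert (0 < 2 ^ b) by (apply pow_lt; lra). nra. Qed.

Lemma sumf1 K : rsum (fun i => f1 q (S i)) K <= E 0.
Proof. rewrite (rsum_ext _ (fun i => f1 q (S i) * (x * INR (S i)) ^ 0)) by (intros; simpl; ring).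
 apply sumPT. Qed.

End Q.

Fixpoint cntH (w : word) : nat := match w with [] => O | Hb :: w' => S (cntH w') | _ :: w' => cntH w' end.
Fixpoint cntG (w : word) : nat := match w with [] => O | Hb :: w' => cntG w' | _ :: w' => S (cntG w') end.

Section Q.
Variable q : R.
Hypothesis hq : 0 < q < 1.
Let x := 1 - q.
Variable N : nat.
Hypothesis hN : 1 <= x * INR N <= 2.

Definition Bnd c a rl := forall m, nest (Fq q) m rl <= c * (x * INR m) ^ a.

Lemma xpos : 0 < x. Proof. unfold x; lra. Qed.

Lemma mono_pow c a i m : 0 <= c -> (S i <= m)%nat -> c * (x * INR (S i)) ^ a <= c * (x * INR m) ^ a.
Proof. intros Hc Hi. apply Rmult_le_compat_l; auto. apply pow_incr. split.
 - apply Rmult_le_pos; [left; apply xpos|apply pos_INR].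
 - apply Rmult_le_compat_l; [left; apply xpos|apply le_INR; auto]. Qed.

Lemma Bnd_le c c' a rl : c <= c' -> Bnd c a rl -> Bnd c' a rl.
Proof. intros Hc HB m. eapply Rle_trans; [apply HB|]. apply Rmult_le_compat_r; auto.
 apply pow_le. apply Rmult_le_pos; [left; apply xpos|apply pos_INR]. Qed.

Lemma nest_nn m rl : 0 <= nest (Fq q) m rl.
Proof. apply nest_nonneg. intros; apply Fq_nonneg; auto. Qed.

Lemma BH c a rl : 0 <= c -> Bnd c a rl -> Bnd c (S a) (Hb :: rl).
Proof. intros Hc HB m. cbn [nest].
 apply Rle_trans with (rsum (fun _ => x * (c * (x * INR m) ^ a)) (pred m)).
 - apply rsum_le. intros i Hi. simpl Fq. fold x. apply Rmult_le_compat_l; [left; apply xpos|].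
   eapply Rle_trans; [apply HB|]. apply mono_pow; auto; lia.
 - rewrite rsum_const. destruct (INR_pred m) as [H1 _].
   assert (0 <= c * (x * INR m) ^ a) by (apply Rmult_le_pos; auto; apply pow_le; apply Rmult_le_pos; [left; apply xpos|apply pos_INR]).
   assert (0 < x) by apply xpos.
   assert (0 <= INR (pred m)) by apply pos_INR.
   change ((x * INR m) ^ S a) with ((x * INR m) * (x * INR m) ^ a).
   replace (c * (x * INR m * (x * INR m) ^ a)) with (INR m * (x * (c * (x * INR m) ^ a))) by ring.
   apply Rmult_le_compat_r; auto. apply Rmult_le_pos; lra. Qed.

Lemma BG c a k rl : (1 <= k)%nat -> 0 <= c -> Bnd c a rl -> Bnd (c * E N 0) a (G k :: rl).
Proof. intros Hk Hc HB m. cbn [nest].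
 apply Rle_trans with (rsum (fun i => f1 q (S i) * (c * (x * INR m) ^ a)) (pred m)).
 - apply rsum_le. intros i Hi. rewrite Fq_G.
   assert (f1 q (S i) ^ k <= f1 q (S i)) by (apply f1_pow_le; auto; lia).
   assert (0 <= f1 q (S i) ^ k) by (apply pow_le, f1_nonneg; auto; lia).
   assert (nest (Fq q) (S i) rl <= c * (x * INR m) ^ a) by (eapply Rle_trans; [apply HB|]; apply mono_pow; auto; lia).
   assert (0 <= nest (Fq q) (S i) rl) by apply nest_nn.
   apply Rmult_le_compat; auto.
 - rewrite (rsum_ext _ (fun i => (c * (x * INR m) ^ a) * f1 q (S i))) by (intros; ring).
   rewrite rsum_scal.
   assert (rsum (fun i => f1 q (S i)) (pred m) <= E N 0) by (apply sumf1; auto).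
   assert (0 <= c * (x * INR m) ^ a) by (apply Rmult_le_pos; auto; apply pow_le; apply Rmult_le_pos; [left; apply xpos|apply pos_INR]).
   nra. Qed.

Lemma BF c a k rl : (1 <= k)%nat -> 0 <= c -> Bnd c a rl -> Bnd (c * E N a) 0 (G k :: rl).
Proof. intros Hk Hc HB m. cbn [nest]. rewrite pow_O, Rmult_1_r.
 apply Rle_trans with (rsum (fun i => c * (f1 q (S i) * (x * INR (S i)) ^ a)) (pred m)).
 - apply rsum_le. intros i Hi. rewrite Fq_G.
   assert (f1 q (S i) ^ k <= f1 q (S i)) by (apply f1_pow_le; auto; lia).
   assert (0 <= f1 q (S i) ^ k) by (apply pow_le, f1_nonneg; auto; lia).
   assert (nest (Fq q) (S i) rl <= c * (x * INR (S i)) ^ a) by apply HB.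
   assert (0 <= nest (Fq q) (S i) rl) by apply nest_nn.
   replace (c * (f1 q (S i) * (x * INR (S i)) ^ a)) with (f1 q (S i) * (c * (x * INR (S i)) ^ a)) by ring.
   apply Rmult_le_compat; auto.
 - rewrite rsum_scal. apply Rmult_le_compat_l; auto. apply sumPT; auto. Qed.

Lemma BC c b k rl : (2 <= k)%nat -> 0 <= c -> Bnd c (S b) rl -> Bnd (c * x * E N b) 0 (G k :: rl).
Proof. intros Hk Hc HB m. cbn [nest]. rewrite pow_O, Rmult_1_r.
 apply Rle_trans with (rsum (fun i => (c * x) * (f1 q (S i) * (x * INR (S i)) ^ b)) (pred m)).
 - apply rsum_le. intros i Hi. rewrite Fq_G.
   assert (f1 q (S i) ^ k <= f1 q (S i) ^ 2) by (apply f1_pow_le2; auto; lia).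
   assert (0 <= f1 q (S i) ^ k) by (apply pow_le, f1_nonneg; auto; lia).
   assert (nest (Fq q) (S i) rl <= c * (x * INR (S i)) ^ (S b)) by apply HB.
   assert (0 <= nest (Fq q) (S i) rl) by apply nest_nn.
   assert (H0x : 0 <= f1 q (S i)) by (apply f1_nonneg; auto; lia).
   assert (H1x : f1 q (S i) <= / INR (S i)) by (apply f1_le_inv; auto; lia).
   assert (H2x : 0 < INR (S i)) by (apply lt_0_INR; lia).
   assert (H3x : f1 q (S i) * INR (S i) <= 1).
   { apply Rmult_le_reg_r with (/ INR (S i)). apply Rinv_0_lt_compat; auto.
     rewrite Rmult_assoc, Rinv_r, Rmult_1_l, Rmult_1_r; lra. }
   assert (Hp : 0 <= (x * INR (S i)) ^ b) by (apply pow_le; apply Rmult_le_pos; [left; apply xpos|lra]).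
   assert (0 < x) by apply xpos.
   apply Rle_trans with (f1 q (S i) ^ 2 * (c * (x * INR (S i)) ^ S b)).
   + apply Rmult_le_compat; auto.
   + change ((x * INR (S i)) ^ S b) with ((x * INR (S i)) * (x * INR (S i)) ^ b).
     replace (f1 q (S i) ^ 2) with (f1 q (S i) * f1 q (S i)) by ring.
     assert (0 <= c * (x * (f1 q (S i) * (x * INR (S i)) ^ b))) by
       (apply Rmult_le_pos; auto; apply Rmult_le_pos; [lra|]; apply Rmult_le_pos; auto).
     assert (f1 q (S i) * INR (S i) * (c * x * (f1 q (S i) * (x * INR (S i)) ^ b)) <= 1 * (c * x * (f1 q (S i) * (x * INR (S i)) ^ b))).
     { apply Rmult_le_compat_r; auto. apply Rmult_le_pos; [apply Rmult_le_pos; lra|]. apply Rmult_le_pos; auto. }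
     replace (f1 q (S i) * f1 q (S i) * (c * (x * INR (S i) * (x * INR (S i)) ^ b)))
       with (f1 q (S i) * INR (S i) * (c * x * (f1 q (S i) * (x * INR (S i)) ^ b))) by ring.
     lra.
 - rewrite rsum_scal. apply Rmult_le_compat_l; [apply Rmult_le_pos; auto; left; apply xpos|]. apply sumPT; auto. Qed.

Lemma Bext rl1 : List.Forall valid_letter rl1 -> forall c a rl, 0 <= c -> Bnd c a rl ->
  Bnd (c * E N 0 ^ cntG rl1) (a + cntH rl1) (rl1 ++ rl).
Proof. induction rl1 as [|u rl1 IH]; intros Hv c a rl Hc HB.
 - simpl. rewrite Nat.add_0_r, Rmult_1_r. auto.
 - inversion Hv; subst.
   assert (0 <= E N 0) by apply E_nonneg.
   assert (0 <= c * E N 0 ^ cntG rl1) by (apply Rmult_le_pos; auto; apply pow_le; auto).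
   specialize (IH H2 c a rl Hc HB).
   destruct u; simpl cntG; simpl cntH; simpl app.
   + rewrite Nat.add_succ_r. apply BH; auto.
   + simpl in H1. eapply Bnd_le; [|apply BG; eauto]. simpl pow. lra. Qed.

End Q.

Lemma Forall_rev' {A} (P : A -> Prop) l : List.Forall P l -> List.Forall P (rev l).
Proof. rewrite !List.Forall_forall. intros H y Hy. apply H. apply in_rev; auto. Qed.

Lemma cntH_In l : In Hb l -> (1 <= cntH l)%nat.
Proof. induction l as [|u l IH]; simpl; [tauto|]. intros [->|Hi]; [simpl; lia|].
 destruct u; simpl; [lia|auto]. Qed.

Section Q.
Variable q : R.
Hypothesis hq : 0 < q < 1.
Let x := 1 - q.
Variable N : nat.
Hypothesis hN : 1 <= x * INR N <= 2.
Let Lam := Hs N + 1.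

Lemma Lam_ge1 : 1 <= Lam. Proof. unfold Lam. assert (0 <= Hs N) by apply H_nonneg. lra. Qed.

Lemma E0_le : E N 0 <= 2 * Lam.
Proof. unfold E, Lam. simpl. assert (0 <= Hs N) by apply H_nonneg. lra. Qed.

Lemma Ea_le a : E N a <= (2 ^ a + 2 * INR (fact a)) * Lam.
Proof. unfold E, Lam. assert (0 <= Hs N) by apply H_nonneg.
 assert (0 < 2 ^ a) by (apply pow_lt; lra). assert (0 < INR (fact a)) by apply INR_fact_lt_0. nra. Qed.

Lemma E0pow_le g : E N 0 ^ g <= 2 ^ g * Lam ^ g.
Proof. rewrite <- Rpow_mult_distr. apply pow_incr. split; [apply E_nonneg|apply E0_le]. Qed.

Lemma Bnd_nil : Bnd q 1 0 [].
Proof. intros m. simpl. lra. Qed.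

Lemma Bnd0 c rl m : Bnd q c 0 rl -> nest (Fq q) m rl <= c.
Proof. intros HB. specialize (HB m). simpl in HB. lra. Qed.

Lemma after_prefix rl : List.Forall valid_letter rl ->
  Bnd q (E N 0 ^ cntG rl) (cntH rl) rl.
Proof. intros Hv. assert (HB := Bext q hq N hN rl Hv 1 0 [] ltac:(lra) Bnd_nil).
 rewrite app_nil_r, Rmult_1_l in HB. exact HB. Qed.

Lemma H0sec w' k M : (1 <= k)%nat -> List.Forall valid_letter w' ->
  ZqM_word q M (w' ++ [G k]) <=
  (2 ^ cntG (rev w') * (2 ^ cntH (rev w') + 2 * INR (fact (cntH (rev w'))))) * Lam ^ S (cntG (rev w')).
Proof. intros Hk Hv. unfold ZqM_word. rewrite rev_app_distr. simpl app.
 set (g := cntG (rev w')). set (a := cntH (rev w')).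
 assert (HB := BF q hq N hN _ _ k _ Hk (pow_le _ g (E_nonneg N 0)) (after_prefix (rev w') (Forall_rev' _ _ Hv))).
 eapply Rle_trans; [apply Bnd0; exact HB|]. fold g a.
 assert (H1 := E0pow_le g). assert (H2 := Ea_le a).
 assert (0 <= E N 0 ^ g) by (apply pow_le, E_nonneg). assert (0 <= E N a) by apply E_nonneg.
 assert (H3 : E N 0 ^ g * E N a <= (2 ^ g * Lam ^ g) * ((2 ^ a + 2 * INR (fact a)) * Lam)) by (apply Rmult_le_compat; auto).
 eapply Rle_trans; [exact H3|]. right. simpl. ring. Qed.

Lemma n0core B k : (2 <= k)%nat -> In Hb B -> List.Forall valid_letter B ->
  Bnd q (E N 0 ^ cntG (rev B) * x * E N (pred (cntH (rev B)))) 0 (G k :: rev B).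
Proof. intros Hk Hin Hv.
 assert (Ha : (1 <= cntH (rev B))%nat) by (apply cntH_In, in_rev; rewrite rev_involutive; auto).
 assert (HP := after_prefix (rev B) (Forall_rev' _ _ Hv)).
 assert (HP' : Bnd q (E N 0 ^ cntG (rev B)) (S (pred (cntH (rev B)))) (rev B))
   by (replace (S (pred (cntH (rev B)))) with (cntH (rev B)) by lia; exact HP).
 apply (BC q hq N hN _ _ k _ Hk (pow_le _ _ (E_nonneg N 0)) HP'). Qed.

Lemma n0sec_nil B k M : (2 <= k)%nat -> In Hb B -> List.Forall valid_letter B ->
  ZqM_word q M (B ++ [G k]) <=
  (2 ^ cntG (rev B) * (2 ^ pred (cntH (rev B)) + 2 * INR (fact (pred (cntH (rev B)))))) * x * Lam ^ S (cntG (rev B)).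
Proof. intros Hk Hin Hv. unfold ZqM_word. rewrite rev_app_distr. simpl app.
 eapply Rle_trans; [apply Bnd0; apply n0core; auto|].
 set (g := cntG (rev B)). set (b := pred (cntH (rev B))).
 assert (H1 := E0pow_le g). assert (H2 := Ea_le b).
 assert (0 <= E N 0 ^ g) by (apply pow_le, E_nonneg). assert (0 <= E N b) by apply E_nonneg.
 assert (0 < x) by (unfold x; lra).
 assert (H5 : E N 0 ^ g * E N b <= (2 ^ g * Lam ^ g) * ((2 ^ b + 2 * INR (fact b)) * Lam)) by (apply Rmult_le_compat; auto).
 replace (E N 0 ^ g * x * E N b) with (x * (E N 0 ^ g * E N b)) by ring.
 eapply Rle_trans; [apply Rmult_le_compat_l; [lra|exact H5]|]. right. simpl. ring. Qed.

Lemma n0sec_cons B k C' j M : (2 <= k)%nat -> In Hb B -> List.Forall valid_letter B ->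
  List.Forall valid_letter C' -> (1 <= j)%nat ->
  ZqM_word q M (B ++ G k :: C' ++ [G j]) <=
  ((2 ^ cntG (rev B) * (2 ^ pred (cntH (rev B)) + 2 * INR (fact (pred (cntH (rev B)))))) *
   (2 ^ cntG (rev C') * (2 ^ (cntH (rev C')) + 2 * INR (fact (cntH (rev C')))))) * x *
   Lam ^ (S (cntG (rev B)) + S (cntG (rev C'))).
Proof. intros Hk Hin Hv Hv' Hj. unfold ZqM_word.
 replace (rev (B ++ G k :: C' ++ [G j])) with (G j :: rev C' ++ (G k :: rev B)).
 2:{ rewrite rev_app_distr. simpl. rewrite rev_app_distr. simpl. rewrite <- !app_assoc. reflexivity. }
 set (g := cntG (rev B)). set (b := pred (cntH (rev B))).
 set (g' := cntG (rev C')). set (a' := cntH (rev C')).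
 assert (0 < x) by (unfold x; lra).
 assert (Hc : 0 <= E N 0 ^ g * x * E N b) by (apply Rmult_le_pos; [apply Rmult_le_pos; [apply pow_le, E_nonneg|lra]|apply E_nonneg]).
 assert (HB1 := n0core B k Hk Hin Hv). fold g b in HB1.
 assert (HB2 := Bext q hq N hN (rev C') (Forall_rev' _ _ Hv') _ _ _ Hc HB1).
 assert (Hc2 : 0 <= E N 0 ^ g * x * E N b * E N 0 ^ g') by (apply Rmult_le_pos; auto; apply pow_le, E_nonneg).
 assert (HB3 := BF q hq N hN _ _ j _ Hj Hc2 HB2). rewrite Nat.add_0_l in HB3. fold g' a' in HB3.
 eapply Rle_trans; [apply Bnd0; exact HB3|].
 assert (H1 := E0pow_le g). assert (H2 := Ea_le b). assert (H1' := E0pow_le g'). assert (H2' := Ea_le a').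
 assert (0 <= E N 0 ^ g) by (apply pow_le, E_nonneg). assert (0 <= E N b) by apply E_nonneg.
 assert (0 <= E N 0 ^ g') by (apply pow_le, E_nonneg). assert (0 <= E N a') by apply E_nonneg.
 assert (X1 : E N 0 ^ g * E N b <= (2 ^ g * Lam ^ g) * ((2 ^ b + 2 * INR (fact b)) * Lam)) by (apply Rmult_le_compat; auto).
 assert (X2 : E N 0 ^ g' * E N a' <= (2 ^ g' * Lam ^ g') * ((2 ^ a' + 2 * INR (fact a')) * Lam)) by (apply Rmult_le_compat; auto).
 assert (0 <= E N 0 ^ g * E N b) by (apply Rmult_le_pos; auto).
 assert (0 <= E N 0 ^ g' * E N a') by (apply Rmult_le_pos; auto).
 replace (E N 0 ^ g * x * E N b * E N 0 ^ g' * E N a') with (x * ((E N 0 ^ g * E N b) * (E N 0 ^ g' * E N a'))) by ring.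
 eapply Rle_trans; [apply Rmult_le_compat_l; [lra|apply Rmult_le_compat; [auto|auto|exact X1|exact X2]]|].
 right. rewrite pow_add. simpl. ring. Qed.

End Q.

Definition Nq q := Z.to_nat (up (/ (1 - q))).

Lemma hNq q : 0 < q < 1 -> 1 <= (1 - q) * INR (Nq q) <= 2.
Proof. intros hq. unfold Nq. destruct (archimed (/ (1 - q))) as [A1 A2].
 assert (0 < / (1 - q)) by (apply Rinv_0_lt_compat; lra).
 assert (Hz : (0 <= up (/ (1 - q)))%Z) by (apply le_IZR; lra).
 rewrite INR_IZR_INZ, Z2Nat.id by exact Hz.
 assert ((1 - q) * / (1 - q) = 1) by (field; lra).
 assert (1 <= / (1 - q)).
 { rewrite <- Rinv_1. apply Rinv_le_contravar; lra. }
 split; nra. Qed.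

Lemma exp_le a b : a <= b -> exp a <= exp b.
Proof. intros [H|H]; [left; apply exp_increasing; auto|subst; lra]. Qed.

Lemma ln_le_sub1 z : 0 < z -> ln z <= z - 1.
Proof. intros Hz. assert (H := exp_ineq1_le (ln z)). rewrite exp_ln in H by auto. lra. Qed.

Lemma Hs_ln n : Hs (S n) <= 1 + ln (INR (S n)).
Proof. induction n.
 - unfold Hs. simpl. rewrite ln_1. lra.
 - unfold Hs in *. change (rsum (fun i => / INR (S i)) (S (S n))) with
     (rsum (fun i => / INR (S i)) (S n) + / INR (S (S n))).
   assert (0 < INR (S n)) by (apply lt_0_INR; lia).
   assert (E : INR (S (S n)) = INR (S n) + 1) by apply S_INR.
   assert (Hl := ln_le_sub1 (INR (S n) / INR (S (S n))) ltac:(apply Rdiv_lt_0_compat; lra)).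
   rewrite ln_div in Hl by lra.
   assert (INR (S n) / INR (S (S n)) - 1 = - / INR (S (S n))) by (rewrite E; field; lra).
   lra. Qed.

Lemma exp_pow t d : exp t ^ d = exp (INR d * t).
Proof. induction d.
 - simpl. rewrite Rmult_0_l, exp_0. reflexivity.
 - rewrite S_INR. simpl pow. rewrite IHd, <- exp_plus. f_equal. ring. Qed.

Lemma pow_exp_bound y d : 0 <= y -> y ^ d <= (2 * INR d + 2) ^ d * exp (y / 2).
Proof. intros Hy. set (c := 2 * INR d + 2).
 assert (Hc : 0 < c) by (unfold c; assert (0 <= INR d) by apply pos_INR; lra).
 set (t := y / c).
 assert (Ht : 0 <= t) by (unfold t; apply Rmult_le_pos; [lra|apply Rlt_le, Rinv_0_lt_compat, Hc]).
 replace y with (c * t) at 1 by (unfold t; field; lra).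
 rewrite Rpow_mult_distr. apply Rmult_le_compat_l; [apply pow_le; lra|].
 apply Rle_trans with (exp t ^ d). { apply pow_incr. split; [exact Ht|]. assert (H := exp_ineq1_le t). lra. }
 rewrite exp_pow. apply exp_le. unfold t, c.
 assert (0 <= INR d) by apply pos_INR.
 apply Rmult_le_reg_r with (2 * INR d + 2); [lra|].
 replace (INR d * (y / (2 * INR d + 2)) * (2 * INR d + 2)) with (INR d * y) by (field; lra).
 replace (y / 2 * (2 * INR d + 2)) with (INR d * y + y) by field. lra. Qed.

Lemma x_exp_sqrt x : 0 < x -> x * exp (ln (2 / x) / 2) = sqrt (2 * x).
Proof. intros Hx. set (e := exp (ln (2 / x) / 2)).
 assert (He : e * e = 2 / x).
 { unfold e. rewrite <- exp_plus. replace (ln (2 / x) / 2 + ln (2 / x) / 2) with (ln (2 / x)) by field.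
   apply exp_ln. apply Rdiv_lt_0_compat; lra. }
 assert (0 < e) by apply exp_pos.
 replace (2 * x) with ((x * e) * (x * e)).
 - rewrite sqrt_square; auto. apply Rmult_le_pos; lra.
 - replace (x * e * (x * e)) with (x * x * (e * e)) by ring. rewrite He. field. lra. Qed.

Definition Lamq q := Hs (Nq q) + 1.

Lemma Lamq_bound q : 0 < q < 1 -> 0 <= Lamq q <= 2 + ln (2 / (1 - q)).
Proof. intros hq. assert (HN := hNq q hq). unfold Lamq.
 assert (0 <= Hs (Nq q)) by apply H_nonneg. split; [lra|].
 destruct (Nq q) as [|n] eqn:En. { simpl in HN. lra. }
 assert (H1 := Hs_ln n).
 assert (INR (S n) <= 2 / (1 - q)).
 { apply Rmult_le_reg_l with (1 - q); [lra|]. replace ((1 - q) * (2 / (1 - q))) with 2 by (field; lra). lra. }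
 assert (ln (INR (S n)) <= ln (2 / (1 - q))) by (apply ln_le; auto; apply lt_0_INR; lia).
 lra. Qed.

Lemma xLam_bound d q : 0 < q < 1 ->
  (1 - q) * Lamq q ^ d <= (2 * INR d + 2) ^ d * exp 1 * sqrt (2 * (1 - q)).
Proof. intros hq. destruct (Lamq_bound q hq) as [H0 H1].
 assert (Hl : 0 <= ln (2 / (1 - q))).
 { rewrite <- ln_1. apply ln_le; [lra|]. apply Rmult_le_reg_l with (1 - q); [lra|].
   replace ((1 - q) * (2 / (1 - q))) with 2 by (field; lra). lra. }
 set (y := 2 + ln (2 / (1 - q))).
 assert (Lamq q ^ d <= y ^ d) by (apply pow_incr; unfold y; lra).
 assert (y ^ d <= (2 * INR d + 2) ^ d * exp (y / 2)) by (apply pow_exp_bound; unfold y; lra).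
 assert (Ey : exp (y / 2) = exp 1 * exp (ln (2 / (1 - q)) / 2)).
 { rewrite <- exp_plus. f_equal. unfold y. field. }
 rewrite <- (x_exp_sqrt (1 - q)) by lra.
 apply Rle_trans with ((1 - q) * ((2 * INR d + 2) ^ d * exp (y / 2))).
 - apply Rmult_le_compat_l; lra.
 - rewrite Ey. right. ring. Qed.

Lemma block_valid l : List.Forall valid_letter (flat_map block l).
Proof. induction l as [|b l IH]; simpl; [constructor|]. apply List.Forall_app; split; auto.
 unfold block. apply List.Forall_app; split.
 - apply List.Forall_forall. intros u Hu. apply repeat_spec in Hu. subst. simpl. auto.
 - constructor; [simpl; lia|constructor]. Qed.

Lemma block_end l : l <> [] -> exists C' j, flat_map block l = C' ++ [G j] /\ (1 <= j)%nat.
Proof. intros Hl. destruct (exists_last Hl) as [l1 [b ->]].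
 rewrite flat_map_app. simpl. rewrite app_nil_r. unfold block.
 exists (flat_map block l1 ++ repeat Hb (fst b)), (S (snd b)). split; [|lia].
 rewrite <- app_assoc. reflexivity. Qed.

Lemma In_Hb_block b : (1 <= fst b)%nat -> In Hb (block b).
Proof. intros H. unfold block. apply in_or_app. left. destruct (fst b); [lia|]. simpl; auto. Qed.

Lemma n0_struct w : n0word w -> exists B k C, w = B ++ G k :: C /\ (2 <= k)%nat /\ In Hb B /\
  List.Forall valid_letter B /\ List.Forall valid_letter C /\
  (C = [] \/ exists C' j, C = C' ++ [G j] /\ (1 <= j)%nat).
Proof. intros [blocks [Hne [-> [s [t [Hst [Ht [Hs Ht2]]]]]]]].
 destruct (nth_split blocks (0%nat, 0%nat) Ht) as [l1 [l2 [Eb Hl1]]].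
 remember (nth t blocks (0%nat, 0%nat)) as bt eqn:Ebt.
 exists (flat_map block l1 ++ repeat Hb (fst bt)), (S (snd bt)), (flat_map block l2).
 split; [|split; [lia|split; [|split; [|split]]]].
 - rewrite Eb, flat_map_app. cbn [flat_map].
   change (block bt) with (repeat Hb (fst bt) ++ [G (S (snd bt))]). rewrite <- !app_assoc. reflexivity.
 - apply in_or_app. destruct (Nat.eq_dec s t) as [->|Hne'].
   + right. rewrite <- Ebt in Hs. destruct (fst bt); [lia|]. simpl; auto.
   + left. assert (Hs1 : (s < length l1)%nat) by lia.
     rewrite Eb, app_nth1 in Hs by auto.
     apply in_flat_map. exists (nth s l1 (0%nat, 0%nat)). split; [apply nth_In; auto|].
     apply In_Hb_block; auto.
 - apply List.Forall_app; split; [apply block_valid|].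
   apply List.Forall_forall. intros u Hu. apply repeat_spec in Hu. subst. simpl. auto.
 - apply block_valid.
 - destruct l2 as [|b l2]; [left; reflexivity|right]. apply block_end. discriminate. Qed.

Lemma x_le_sqrt x : 0 <= x <= 2 -> x <= sqrt (2 * x).
Proof. intros Hx. rewrite <- (sqrt_square x) at 1 by lra. apply sqrt_le_1_alt. nra. Qed.

Lemma ZqM_word_nn q M w : 0 < q < 1 -> 0 <= ZqM_word q M w.
Proof. intros hq. unfold ZqM_word. apply nest_nn; auto. Qed.

Lemma H0_outer w : H0word w -> exists K, 0 <= K /\ forall q, 0 < q < 1 -> forall M,
  (1 - q) * ZqM_word q M w <= K * sqrt (2 * (1 - q)).
Proof. intros [Hv [->|[w' [k [Hk ->]]]]].
 - exists 1. split; [lra|]. intros q hq M. unfold ZqM_word. simpl. rewrite Rmult_1_r, Rmult_1_l.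
   apply x_le_sqrt. lra.
 - apply List.Forall_app in Hv. destruct Hv as [Hv _].
   set (K0 := 2 ^ cntG (rev w') * (2 ^ cntH (rev w') + 2 * INR (fact (cntH (rev w'))))).
   set (d := S (cntG (rev w'))).
   assert (HK0 : 0 <= K0).
   { unfold K0. apply Rmult_le_pos; [apply pow_le; lra|].
     assert (0 < 2 ^ cntH (rev w')) by (apply pow_lt; lra). assert (0 < INR (fact (cntH (rev w')))) by apply INR_fact_lt_0. lra. }
   assert (0 <= (2 * INR d + 2) ^ d * exp 1).
   { apply Rmult_le_pos; [apply pow_le|left; apply exp_pos]. assert (0 <= INR d) by apply pos_INR. lra. }
   exists (K0 * ((2 * INR d + 2) ^ d * exp 1)). split; [apply Rmult_le_pos; auto|].
   intros q hq M.
   assert (H1 := H0sec q hq (Nq q) (hNq q hq) w' k M Hk Hv). fold K0 d in H1.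
   assert (H2 := xLam_bound d q hq). unfold Lamq in H2.
   apply Rle_trans with ((1 - q) * (K0 * (Hs (Nq q) + 1) ^ d)).
   + apply Rmult_le_compat_l; [lra|exact H1].
   + replace ((1 - q) * (K0 * (Hs (Nq q) + 1) ^ d)) with (K0 * ((1 - q) * (Hs (Nq q) + 1) ^ d)) by ring.
     rewrite Rmult_assoc. apply Rmult_le_compat_l; auto. Qed.

Lemma n0_outer w : n0word w -> exists K, 0 <= K /\ forall q, 0 < q < 1 -> forall M,
  ZqM_word q M w <= K * sqrt (2 * (1 - q)).
Proof. intros Hw. destruct (n0_struct w Hw) as [B [k [C [-> [Hk [Hin [HvB [HvC HC]]]]]]]].
 destruct HC as [->|[C' [j [-> Hj]]]].
 - set (K0 := 2 ^ cntG (rev B) * (2 ^ pred (cntH (rev B)) + 2 * INR (fact (pred (cntH (rev B)))))).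
   set (d := S (cntG (rev B))).
   assert (HK0 : 0 <= K0).
   { unfold K0. apply Rmult_le_pos; [apply pow_le; lra|].
     assert (0 < 2 ^ pred (cntH (rev B))) by (apply pow_lt; lra). assert (0 < INR (fact (pred (cntH (rev B))))) by apply INR_fact_lt_0. lra. }
   assert (0 <= (2 * INR d + 2) ^ d * exp 1).
   { apply Rmult_le_pos; [apply pow_le|left; apply exp_pos]. assert (0 <= INR d) by apply pos_INR. lra. }
   exists (K0 * ((2 * INR d + 2) ^ d * exp 1)). split; [apply Rmult_le_pos; auto|].
   intros q hq M.
   assert (H1 := n0sec_nil q hq (Nq q) (hNq q hq) B k M Hk Hin HvB). fold K0 d in H1.
   assert (H2 := xLam_bound d q hq). unfold Lamq in H2.
   eapply Rle_trans; [exact H1|].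
   replace (K0 * (1 - q) * (Hs (Nq q) + 1) ^ d) with (K0 * ((1 - q) * (Hs (Nq q) + 1) ^ d)) by ring.
   rewrite Rmult_assoc. apply Rmult_le_compat_l; auto.
 - apply List.Forall_app in HvC. destruct HvC as [HvC _].
   set (K0 := (2 ^ cntG (rev B) * (2 ^ pred (cntH (rev B)) + 2 * INR (fact (pred (cntH (rev B)))))) *
   (2 ^ cntG (rev C') * (2 ^ (cntH (rev C')) + 2 * INR (fact (cntH (rev C')))))).
   set (d := (S (cntG (rev B)) + S (cntG (rev C')))%nat).
   assert (HK0 : 0 <= K0).
   { unfold K0. apply Rmult_le_pos; (apply Rmult_le_pos; [apply pow_le; lra|]).
     assert (0 < 2 ^ pred (cntH (rev B))) by (apply pow_lt; lra). assert (0 < INR (fact (pred (cntH (rev B))))) by apply INR_fact_lt_0. lra.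
     assert (0 < 2 ^ (cntH (rev C'))) by (apply pow_lt; lra). assert (0 < INR (fact (cntH (rev C')))) by apply INR_fact_lt_0. lra. }
   assert (0 <= (2 * INR d + 2) ^ d * exp 1).
   { apply Rmult_le_pos; [apply pow_le|left; apply exp_pos]. assert (0 <= INR d) by apply pos_INR. lra. }
   exists (K0 * ((2 * INR d + 2) ^ d * exp 1)). split; [apply Rmult_le_pos; auto|].
   intros q hq M.
   assert (H1 := n0sec_cons q hq (Nq q) (hNq q hq) B k C' j M Hk Hin HvB HvC Hj). fold K0 d in H1.
   assert (H2 := xLam_bound d q hq). unfold Lamq in H2.
   eapply Rle_trans; [exact H1|].
   replace (K0 * (1 - q) * (Hs (Nq q) + 1) ^ d) with (K0 * ((1 - q) * (Hs (Nq q) + 1) ^ d)) by ring.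
   rewrite Rmult_assoc. apply Rmult_le_compat_l; auto. Qed.

Definition cnorm (c : cpoly) : R := fold_right (fun a acc => Rabs (Q2R a) + acc) 0 c.

Lemma cnorm_nn c : 0 <= cnorm c.
Proof. induction c; simpl; [lra|]. assert (0 <= Rabs (Q2R a)) by apply Rabs_pos. lra. Qed.

Lemma peval_bound c y : 0 <= y <= 1 -> Rabs (peval c y) <= cnorm c.
Proof. intros Hy. induction c as [|a c IH]; simpl.
 - rewrite Rabs_R0. lra.
 - eapply Rle_trans; [apply Rabs_triang|]. rewrite Rabs_mult.
   assert (Rabs y <= 1) by (rewrite Rabs_pos_eq; lra).
   assert (0 <= Rabs (peval c y)) by apply Rabs_pos.
   assert (Rabs y * Rabs (peval c y) <= 1 * cnorm c) by (apply Rmult_le_compat; auto; apply Rabs_pos).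
   lra. Qed.

Lemma Q2R_zero : Q2R 0%Q = 0.
Proof. unfold Q2R. simpl. ring. Qed.

Lemma ZqM_fold_acc q M s a :
  fold_right (fun p acc => peval (fst p) (1 - q) * ZqM_word q M (snd p) + acc) a s = ZqM q M s + a.
Proof. unfold ZqM. induction s; simpl; [ring|]. rewrite IHs. ring. Qed.

Lemma ZqM_app q M s t : ZqM q M (s ++ t) = ZqM q M s + ZqM q M t.
Proof. unfold ZqM at 1. rewrite fold_right_app. rewrite ZqM_fold_acc. fold (ZqM q M t). ring. Qed.

Lemma ZqM_cons q M p s : ZqM q M (p :: s) = peval (fst p) (1 - q) * ZqM_word q M (snd p) + ZqM q M s.
Proof. reflexivity. Qed.

Lemma s0_bound s0 : List.Forall (fun p => n0word (snd p)) s0 -> exists K, 0 <= K /\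
  forall q, 0 < q < 1 -> forall M, Rabs (ZqM q M s0) <= K * sqrt (2 * (1 - q)).
Proof. induction s0 as [|p s0 IH]; intros Hf.
 - exists 0. split; [lra|]. intros. unfold ZqM. simpl. rewrite Rabs_R0. lra.
 - inversion Hf; subst. destruct (IH H2) as [K2 [HK2 HB2]].
   destruct (n0_outer _ H1) as [K1 [HK1 HB1]].
   exists (cnorm (fst p) * K1 + K2). split; [assert (0 <= cnorm (fst p)) by apply cnorm_nn; nra|].
   intros q hq M. rewrite ZqM_cons.
   eapply Rle_trans; [apply Rabs_triang|]. rewrite Rabs_mult.
   assert (Hz := ZqM_word_nn q M (snd p) hq). rewrite (Rabs_pos_eq (ZqM_word q M (snd p))) by auto.
   assert (Rabs (peval (fst p) (1 - q)) <= cnorm (fst p)) by (apply peval_bound; lra).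
   assert (ZqM_word q M (snd p) <= K1 * sqrt (2 * (1 - q))) by auto.
   assert (Rabs (ZqM q M s0) <= K2 * sqrt (2 * (1 - q))) by auto.
   assert (0 <= Rabs (peval (fst p) (1 - q))) by apply Rabs_pos.
   assert (Rabs (peval (fst p) (1 - q)) * ZqM_word q M (snd p) <= cnorm (fst p) * (K1 * sqrt (2 * (1 - q))))
     by (apply Rmult_le_compat; auto).
   lra. Qed.

Lemma s1_bound s1 : List.Forall (fun p => H0word (snd p)) s1 -> exists K, 0 <= K /\
  forall q, 0 < q < 1 -> forall M,
  Rabs (ZqM q M (map (fun p => (hbar_mul (fst p), snd p)) s1)) <= K * sqrt (2 * (1 - q)).
Proof. induction s1 as [|p s1 IH]; intros Hf.
 - exists 0. split; [lra|]. intros. unfold ZqM. simpl. rewrite Rabs_R0. lra.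
 - inversion Hf; subst. destruct (IH H2) as [K2 [HK2 HB2]].
   destruct (H0_outer _ H1) as [K1 [HK1 HB1]].
   exists (cnorm (fst p) * K1 + K2). split; [assert (0 <= cnorm (fst p)) by apply cnorm_nn; nra|].
   intros q hq M. simpl map. rewrite ZqM_cons. simpl fst. simpl snd. unfold hbar_mul. simpl peval.
   rewrite Q2R_zero, Rplus_0_l.
   eapply Rle_trans; [apply Rabs_triang|].
   replace ((1 - q) * peval (fst p) (1 - q) * ZqM_word q M (snd p)) with
     (peval (fst p) (1 - q) * ((1 - q) * ZqM_word q M (snd p))) by ring.
   rewrite Rabs_mult.
   assert (Hz := ZqM_word_nn q M (snd p) hq).
   rewrite (Rabs_pos_eq ((1 - q) * ZqM_word q M (snd p))) by (apply Rmult_le_pos; lra).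
   assert (Rabs (peval (fst p) (1 - q)) <= cnorm (fst p)) by (apply peval_bound; lra).
   assert ((1 - q) * ZqM_word q M (snd p) <= K1 * sqrt (2 * (1 - q))) by auto.
   assert (Rabs (ZqM q M (map (fun p => (hbar_mul (fst p), snd p)) s1)) <= K2 * sqrt (2 * (1 - q))) by auto.
   assert (0 <= Rabs (peval (fst p) (1 - q))) by apply Rabs_pos.
   assert (0 <= (1 - q) * ZqM_word q M (snd p)) by (apply Rmult_le_pos; lra).
   assert (Rabs (peval (fst p) (1 - q)) * ((1 - q) * ZqM_word q M (snd p)) <= cnorm (fst p) * (K1 * sqrt (2 * (1 - q))))
     by (apply Rmult_le_compat; auto).
   unfold hbar_mul in *. lra. Qed.

Lemma Lim_abs_bound u B : (forall n, Rabs (u n) <= B) -> Rabs (real (Lim_seq u)) <= B.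
Proof. intros H.
 assert (H1 : Rbar_le (Lim_seq u) (Lim_seq (fun _ => B))).
 { apply Lim_seq_le_loc. exists 0%nat. intros n _. specialize (H n). apply Rabs_le_between in H. lra. }
 assert (H2 : Rbar_le (Lim_seq (fun _ => - B)) (Lim_seq u)).
 { apply Lim_seq_le_loc. exists 0%nat. intros n _. specialize (H n). apply Rabs_le_between in H. lra. }
 rewrite Lim_seq_const in H1, H2.
 destruct (Lim_seq u) as [r| |]; simpl in *; try tauto. apply Rabs_le. lra. Qed.

Lemma lim_sqrt f K : 0 <= K -> (forall q, 0 < q < 1 -> Rabs (f q) <= K * sqrt (2 * (1 - q))) ->
  filterlim f (at_left 1) (locally 0).
Proof. intros HK Hf. apply filterlim_locally. intros eps.
 set (e := pos eps). assert (He : 0 < e) by apply cond_pos.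
 set (d := Rmin (1/2) (e * e / (2 * ((K + 1) * (K + 1))))).
 assert (Hd : 0 < d).
 { unfold d. apply Rmin_pos; [lra|]. apply Rdiv_lt_0_compat; [nra|]. nra. }
 exists (mkposreal d Hd). intros y Hy Hy1.
 change (Rabs (y - 1) < d) in Hy.
 change (Rabs (f y - 0) < e).
 assert (Hd1 : d <= 1/2) by apply Rmin_l.
 assert (Hd2 : d <= e * e / (2 * ((K + 1) * (K + 1)))) by apply Rmin_r.
 apply Rabs_lt_between in Hy.
 assert (hq : 0 < y < 1) by lra.
 specialize (Hf y hq). rewrite Rminus_0_r.
 set (s := sqrt (2 * (1 - y))).
 assert (Hs0 : 0 <= s) by apply sqrt_pos.
 assert (Hss : s * s = 2 * (1 - y)) by (apply sqrt_sqrt; lra).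
 assert (Hsm : s * s * ((K + 1) * (K + 1)) < e * e).
 { rewrite Hss. assert (2 * (1 - y) < 2 * d) by lra.
   assert (2 * d * ((K + 1) * (K + 1)) <= e * e).
   { apply Rmult_le_reg_r with (/ (2 * ((K+1)*(K+1)))). apply Rinv_0_lt_compat; nra.
     replace (2 * d * ((K + 1) * (K + 1)) * / (2 * ((K + 1) * (K + 1)))) with d by (field; lra).
     exact Hd2. }
   assert (0 < (K+1)*(K+1)) by nra. nra. }
 assert (Hlt : (K + 1) * s < e).
 { destruct (Rlt_or_le ((K + 1) * s) e) as [Hl|Hl]; auto.
   assert (e * e <= (K + 1) * s * ((K + 1) * s)) by (apply Rmult_le_compat; lra). nra. }
 fold s in Hf. nra. Qed.

Theorem part2 (s0 s1 : elt) :
  List.Forall (fun p => n0word (snd p)) s0 ->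
  List.Forall (fun p => H0word (snd p)) s1 ->
  filterlim (fun q => Zq q (n_elt s0 s1)) (at_left 1) (locally 0).
Proof. intros H0 H1. destruct (s0_bound s0 H0) as [K0 [HK0 HB0]].
 destruct (s1_bound s1 H1) as [K1 [HK1 HB1]].
 apply (lim_sqrt _ (K0 + K1)); [lra|]. intros q hq. unfold Zq.
 apply Lim_abs_bound. intros M. unfold n_elt. rewrite ZqM_app.
 eapply Rle_trans; [apply Rabs_triang|].
 specialize (HB0 q hq M). specialize (HB1 q hq M). lra. Qed.

Lemma lim_plus (f g : R -> R) a b : filterlim f (at_left 1) (locally a) -> filterlim g (at_left 1) (locally b) ->
  filterlim (fun q => f q + g q) (at_left 1) (locally (a + b)).
Proof. intros Hf Hg. apply (filterlim_comp_2 f g Rplus Hf Hg). apply (filterlim_plus (V := R_NormedModule)). Qed.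

Lemma lim_mult (f g : R -> R) a b : filterlim f (at_left 1) (locally a) -> filterlim g (at_left 1) (locally b) ->
  filterlim (fun q => f q * g q) (at_left 1) (locally (a * b)).
Proof. intros Hf Hg. apply (filterlim_comp_2 f g Rmult Hf Hg). apply (filterlim_mult (K := R_AbsRing)). Qed.

Lemma lim_rsum (h : R -> nat -> R) h0 n : (forall i, filterlim (fun q => h q i) (at_left 1) (locally (h0 i))) ->
  filterlim (fun q => rsum (h q) n) (at_left 1) (locally (rsum h0 n)).
Proof. intros Hi. induction n; simpl.
 - apply filterlim_const.
 - apply lim_plus; auto. Qed.

Lemma nest_cont {A} (F : R -> nat -> A -> R) (G0 : nat -> A -> R) :
  (forall n u, filterlim (fun q => F q (S n) u) (at_left 1) (locally (G0 (S n) u))) ->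
  forall rl M, filterlim (fun q => nest (F q) M rl) (at_left 1) (locally (nest G0 M rl)).
Proof. intros HF rl. induction rl as [|u rl IH]; intros M; simpl.
 - apply filterlim_const.
 - apply (lim_rsum (fun q i => F q (S i) u * nest (F q) (S i) rl)). intros i. apply lim_mult; auto. Qed.

Lemma cont_pow f x j : continuity_pt f x -> continuity_pt (fun y => f y ^ j) x.
Proof. intros Hf. induction j.
 - apply continuity_pt_const. intros a b. reflexivity.
 - eapply continuity_pt_ext; [|apply (continuity_pt_mult f (fun y => f y ^ j)); eauto].
   intros; reflexivity. Qed.

Lemma cont_rsum_pow x n : continuity_pt (fun y => rsum (fun i => y ^ i) n) x.
Proof. induction n; simpl.
 - apply continuity_pt_const. intros a b. reflexivity.
 - eapply continuity_pt_ext; [|apply (continuity_pt_plus (fun y => rsum (fun i => y ^ i) n) (fun y => y ^ n)); eauto].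
   + intros; reflexivity.
   + apply cont_pow, continuity_pt_id. Qed.

Lemma rsum_pow1 n : rsum (fun i => 1 ^ i) n = INR n.
Proof. rewrite (rsum_ext _ (fun _ => 1)) by (intros; apply pow1). rewrite rsum_const. ring. Qed.

Lemma Fq_lim n k : filterlim (fun q => Fq q (S n) (G k)) (at_left 1) (locally (/ (INR (S n) ^ k))).
Proof.
 set (g := fun q => q ^ (k * S n) / (rsum (fun i => q ^ i) (S n)) ^ k).
 assert (Hn : 0 < INR (S n)) by (apply lt_0_INR; lia).
 assert (Hg1 : g 1 = / (INR (S n) ^ k)).
 { unfold g. rewrite pow1, rsum_pow1. unfold Rdiv. ring. }
 assert (Hc : continuity_pt g 1).
 { unfold g. eapply continuity_pt_ext;
   [|apply (continuity_pt_div (fun q => q ^ (k * S n)) (fun q => rsum (fun i => q ^ i) (S n) ^ k))].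
   - intros; reflexivity.
   - apply cont_pow, continuity_pt_id.
   - apply cont_pow, cont_rsum_pow.
   - rewrite rsum_pow1. apply pow_nonzero. lra. }
 apply continuity_pt_filterlim in Hc. rewrite Hg1 in Hc.
 apply (filterlim_filter_le_1 _ (filter_le_within (fun u => u < 1))) in Hc.
 eapply filterlim_ext_loc; [|exact Hc].
 exists (mkposreal 1 Rlt_0_1). intros y _ Hy. unfold g, Fq. rewrite qnum_rsum by lra. reflexivity. Qed.

Lemma sum_isqrt K : rsum (fun i => / sqrt (INR (S i))) K <= 2 * sqrt (INR K).
Proof. induction K.
 - simpl. rewrite sqrt_0. lra.
 - cbn [rsum]. set (a := sqrt (INR K)) in *. set (b := sqrt (INR (S K))).
   assert (Ha : 0 <= a) by apply sqrt_pos.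
   assert (Hb : 0 < b) by (apply sqrt_lt_R0, lt_0_INR; lia).
   assert (Haa : a * a = INR K) by (apply sqrt_sqrt, pos_INR).
   assert (Hbb : b * b = INR K + 1) by (unfold b; rewrite sqrt_sqrt, S_INR; [lra|apply pos_INR]).
   assert (Hab : a <= b) by (unfold a, b; apply sqrt_le_1_alt, le_INR; lia).
   assert (/ b <= 2 * (b - a)).
   { apply Rmult_le_reg_r with b; auto. rewrite Rinv_l by lra. nra. }
   lra. Qed.

Lemma sum_32 K : rsum (fun i => / (INR (S i) * sqrt (INR (S i)))) K <= 3.
Proof. assert (H : forall K, (1 <= K)%nat -> rsum (fun i => / (INR (S i) * sqrt (INR (S i)))) K <= 3 - 2 / sqrt (INR K)).
 { intros K0 HK0. induction HK0.
   - cbn [rsum]. replace (INR 1) with 1 by reflexivity. rewrite sqrt_1, Rmult_1_r, Rinv_1. lra.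
   - cbn [rsum]. set (a := sqrt (INR m)) in *. set (b := sqrt (INR (S m))).
     assert (Ha : 0 < a) by (apply sqrt_lt_R0, lt_0_INR; lia).
     assert (Hb : 0 < b) by (apply sqrt_lt_R0, lt_0_INR; lia).
     assert (Haa : a * a = INR m) by (apply sqrt_sqrt, pos_INR).
     assert (Hbb : b * b = INR m + 1) by (unfold b; rewrite sqrt_sqrt, S_INR; [lra|apply pos_INR]).
     assert (Hab : a <= b) by (unfold a, b; apply sqrt_le_1_alt, le_INR; lia).
     rewrite <- (sqrt_sqrt (INR (S m))) at 1 by apply pos_INR. fold b.
     assert (Hk : / (b * b * b) <= 2 / a - 2 / b).
     { assert (E1 : 2 / a - 2 / b = 2 * (b - a) / (a * b)) by (field; lra). rewrite E1.
       apply Rmult_le_reg_r with (a * b * (b * b * b)); [apply Rmult_lt_0_compat; nra|].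
       replace (/ (b * b * b) * (a * b * (b * b * b))) with (a * b) by (field; lra).
       replace (2 * (b - a) / (a * b) * (a * b * (b * b * b))) with (2 * (b - a) * (b * b * b)) by (field; lra).
       assert (Hba : (b - a) * (b + a) = 1) by nra.
       assert (X : a <= 2 * (b - a) * (b * b)).
       { apply Rmult_le_reg_r with (a + b); [lra|].
         replace (2 * (b - a) * (b * b) * (a + b)) with (2 * (b * b) * ((b - a) * (b + a))) by ring.
         rewrite Hba. nra. }
       replace (2 * (b - a) * (b * b * b)) with (2 * (b - a) * (b * b) * b) by ring.
       apply Rmult_le_compat_r; lra. }
     lra. }
 destruct K; [simpl; lra|]. assert (Hs := H (S K) ltac:(lia)).
 assert (0 < sqrt (INR (S K))) by (apply sqrt_lt_R0, lt_0_INR; lia).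
 assert (0 < 2 / sqrt (INR (S K))) by (apply Rdiv_lt_0_compat; lra). lra. Qed.

Definition Zf (m k : nat) : R := / (INR m ^ k).

Lemma Zf_pos n k : 0 < Zf (S n) k.
Proof. unfold Zf. apply Rinv_0_lt_compat, pow_lt, lt_0_INR. lia. Qed.

Lemma T1 n k : 1 <= n -> (1 <= k)%nat -> / (n ^ k) * sqrt n <= / sqrt n.
Proof. intros Hn Hk. assert (Hs : 0 < sqrt n) by (apply sqrt_lt_R0; lra).
 assert (Hss : sqrt n * sqrt n = n) by (apply sqrt_sqrt; lra).
 assert (n ^ 1 <= n ^ k) by (apply Rle_pow; auto).
 assert (/ (n ^ k) <= / n) by (apply Rinv_le_contravar; simpl in *; lra).
 apply Rle_trans with (/ n * sqrt n); [apply Rmult_le_compat_r; lra|].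
 right. replace (/ n * sqrt n) with (sqrt n / (sqrt n * sqrt n)) by (rewrite Hss; field; lra). field. lra. Qed.

Lemma T2 n k : 1 <= n -> (2 <= k)%nat -> / (n ^ k) * sqrt n <= / (n * sqrt n).
Proof. intros Hn Hk. assert (Hs : 0 < sqrt n) by (apply sqrt_lt_R0; lra).
 assert (Hss : sqrt n * sqrt n = n) by (apply sqrt_sqrt; lra).
 assert (n ^ 2 <= n ^ k) by (apply Rle_pow; auto).
 assert (0 < n ^ 2) by (apply pow_lt; lra).
 assert (/ (n ^ k) <= / (n ^ 2)) by (apply Rinv_le_contravar; lra).
 apply Rle_trans with (/ (n ^ 2) * sqrt n); [apply Rmult_le_compat_r; lra|].
 right. replace (/ (n ^ 2) * sqrt n) with (sqrt n / (n * (sqrt n * sqrt n))) by (rewrite Hss; field; lra). field. lra. Qed.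

Lemma inner_bound rl : List.Forall (fun k => (1 <= k)%nat) rl ->
  forall m, (1 <= m)%nat -> nest Zf m rl <= 2 ^ length rl * sqrt (INR m).
Proof. induction rl as [|k rl IH]; intros Hf m Hm.
 - simpl. assert (1 <= INR m) by (apply (le_INR 1); auto).
   rewrite <- sqrt_1 at 1. rewrite Rmult_1_l. apply sqrt_le_1_alt. lra.
 - inversion Hf; subst. cbn [nest length].
   apply Rle_trans with (rsum (fun i => 2 ^ length rl * / sqrt (INR (S i))) (pred m)).
   + apply rsum_le. intros i Hi.
     assert (Hn1 : 1 <= INR (S i)) by (apply (le_INR 1); lia).
     assert (HI := IH H2 (S i) ltac:(lia)).
     assert (HT := T1 (INR (S i)) k Hn1 H1).
     assert (0 < Zf (S i) k) by apply Zf_pos.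
     assert (0 < 2 ^ length rl) by (apply pow_lt; lra).
     apply Rle_trans with (Zf (S i) k * (2 ^ length rl * sqrt (INR (S i)))); [apply Rmult_le_compat_l; lra|].
     unfold Zf. replace (/ INR (S i) ^ k * (2 ^ length rl * sqrt (INR (S i)))) with
       (2 ^ length rl * (/ INR (S i) ^ k * sqrt (INR (S i)))) by ring.
     apply Rmult_le_compat_l; lra.
   + rewrite rsum_scal. assert (HS := sum_isqrt (pred m)).
     assert (sqrt (INR (pred m)) <= sqrt (INR m)) by (apply sqrt_le_1_alt; apply le_INR; lia).
     assert (0 < 2 ^ length rl) by (apply pow_lt; lra).
     simpl pow. nra. Qed.

Lemma zeta_bounded ks : admissible ks -> exists B, forall M, zetaM M ks <= B.
Proof. intros [Hf [->|Hl]].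
 - exists 1. intros M. unfold zetaM. simpl. lra.
 - assert (Hne : ks <> []) by (intros ->; simpl in Hl; lia).
   assert (E := app_removelast_last 0%nat Hne).
   set (ks' := removelast ks) in *. set (k := last ks 0%nat) in *.
   assert (Hf' : List.Forall (fun k => (1 <= k)%nat) (rev ks')).
   { apply List.Forall_forall. intros y Hy. apply in_rev in Hy.
     rewrite List.Forall_forall in Hf. apply Hf. rewrite E. apply in_or_app; auto. }
   exists (2 ^ length (rev ks') * 3). intros M. unfold zetaM. rewrite E, rev_app_distr. simpl app. cbn [nest].
   fold Zf.
   apply Rle_trans with (rsum (fun i => 2 ^ length (rev ks') * / (INR (S i) * sqrt (INR (S i)))) (pred M)).
   + apply rsum_le. intros i Hi.
     assert (Hn1 : 1 <= INR (S i)) by (apply (le_INR 1); lia).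
     assert (HI := inner_bound (rev ks') Hf' (S i) ltac:(lia)).
     assert (HT := T2 (INR (S i)) k Hn1 Hl).
     assert (0 < Zf (S i) k) by apply Zf_pos.
     assert (0 < 2 ^ length (rev ks')) by (apply pow_lt; lra).
     apply Rle_trans with (Zf (S i) k * (2 ^ length (rev ks') * sqrt (INR (S i)))); [apply Rmult_le_compat_l; lra|].
     unfold Zf. replace (/ INR (S i) ^ k * (2 ^ length (rev ks') * sqrt (INR (S i)))) with
       (2 ^ length (rev ks') * (/ INR (S i) ^ k * sqrt (INR (S i)))) by ring.
     apply Rmult_le_compat_l; lra.
   + rewrite rsum_scal. assert (HS := sum_32 (pred M)).
     assert (0 < 2 ^ length (rev ks')) by (apply pow_lt; lra). nra. Qed.

Lemma zeta_props ks : admissible ks -> exists l, zeta ks = l /\ is_lim_seq (fun M => zetaM M ks) l /\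
  forall M, zetaM M ks <= l.
Proof. intros Ha. destruct (zeta_bounded ks Ha) as [B HB].
 set (u := fun M => zetaM M ks).
 assert (Hnn : forall n k, 0 <= / (INR (S n) ^ k)) by (intros; left; apply Zf_pos).
 assert (Hinc : forall n, u n <= u (S n)) by (intros n; unfold u, zetaM; apply nest_mono; auto).
 assert (Hmono : forall M, Rbar_le (u M) (Lim_seq u)).
 { intros M. rewrite <- (Lim_seq_const (u M)). apply Lim_seq_le_loc. exists M. intros n Hn.
   unfold u, zetaM. apply nest_mono; auto. }
 assert (Hub : Rbar_le (Lim_seq u) B).
 { rewrite <- (Lim_seq_const B). apply Lim_seq_le_loc. exists 0%nat. intros; apply HB. }
 assert (Hc := Lim_seq_correct u (ex_lim_seq_incr u Hinc)).
 specialize (Hmono 0%nat).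
 destruct (Lim_seq u) as [r| |] eqn:El; simpl in Hmono, Hub; try tauto.
 exists r. split; [unfold zeta; fold u; rewrite El; reflexivity|]. split; [exact Hc|].
 intros M. assert (Hm : Rbar_le (u M) (Lim_seq u)).
 { rewrite <- (Lim_seq_const (u M)). apply Lim_seq_le_loc. exists M. intros n Hn.
   unfold u, zetaM. apply nest_mono; auto. }
 rewrite El in Hm. exact Hm. Qed.

Lemma ZqM_gk q M ks : ZqM q M (gk ks) = nest (fun m k => Fq q m (G k)) M (rev ks).
Proof. unfold ZqM, gk. simpl fold_right. unfold cone. simpl peval.
 replace (Q2R 1) with 1 by (unfold Q2R; simpl; field).
 unfold ZqM_word. rewrite <- map_rev, nest_map. ring. Qed.

Theorem part1 ks : admissible ks ->
  filterlim (fun q => Zq q (gk ks)) (at_left 1) (locally (zeta ks)).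
Proof. intros Ha. destruct (zeta_props ks Ha) as [l [-> [Hlim Hle]]].
 apply filterlim_locally. intros eps.
 set (e := pos eps). assert (He : 0 < e) by apply cond_pos. clearbody e.
 apply is_lim_seq_spec in Hlim.
 destruct (Hlim (mkposreal (e/2) ltac:(lra))) as [M0 HM0].
 specialize (HM0 M0 (Nat.le_refl _)). simpl in HM0.
 assert (Hc := nest_cont (fun q m k => Fq q m (G k)) (fun m k => / (INR m ^ k))
   (fun n u => Fq_lim n u) (rev ks) M0).
 cbv beta in Hc. assert (Hc2 := proj1 (filterlim_locally (F := at_left 1) _ _) Hc (mkposreal (e/2) ltac:(lra))). clear Hc. rename Hc2 into Hc.
 assert (Hpos : at_left 1 (fun q => 0 < q < 1)).
 { unfold at_left, within, locally. exists (mkposreal 1 Rlt_0_1). intros y Hy Hy1. change (Rabs (y - 1) < 1) in Hy.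
   apply Rabs_lt_between in Hy. lra. }
 generalize (filter_and _ _ Hc Hpos). apply filter_imp. intros q [Hq Hq0].
 simpl in Hq. change (Rabs (nest (fun m k => Fq q m (G k)) M0 (rev ks) - zetaM M0 ks) < e/2) in Hq.
 change (Rabs (Zq q (gk ks) - l) < e).
 assert (hq : 0 < q < 1) by lra.
 set (v := fun M => ZqM q M (gk ks)).
 assert (Hvu : forall M, v M <= zetaM M ks).
 { intros M. unfold v. rewrite ZqM_gk. unfold zetaM. apply nest_le. intros n k.
   rewrite Fq_G. assert (0 <= f1 q (S n)) by (apply f1_nonneg; auto; lia).
   assert (f1 q (S n) <= / INR (S n)) by (apply f1_le_inv; auto; lia).
   split; [apply pow_le; auto|]. rewrite <- pow_inv. apply pow_incr. lra. }
 assert (Hup : Rbar_le (Lim_seq v) l).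
 { rewrite <- (Lim_seq_const l). apply Lim_seq_le_loc. exists 0%nat. intros n _.
   eapply Rle_trans; [apply Hvu|apply Hle]. }
 assert (Hlow : Rbar_le (v M0) (Lim_seq v)).
 { rewrite <- (Lim_seq_const (v M0)). apply Lim_seq_le_loc. exists M0. intros n Hn.
   unfold v. rewrite !ZqM_gk. apply nest_mono; auto. intros; rewrite Fq_G; apply pow_le, f1_nonneg; auto; lia. }
 unfold Zq. fold v.
 destruct (Lim_seq v) as [r| |]; simpl in Hup, Hlow; try tauto.
 unfold v in Hlow. rewrite ZqM_gk in Hlow.
 apply Rabs_lt_between in Hq. change (Rabs (zetaM M0 ks - l) < e/2) in HM0. apply Rabs_lt_between in HM0. apply Rabs_lt_between. set (nn := nest (fun m k => Fq q m (G k)) M0 (rev ks)) in *. set (zz := zetaM M0 ks) in *. simpl real. lra. Qed.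


Theorem proposition3p4 :
  (forall ks : list nat, admissible ks ->
     filterlim (fun q => Zq q (gk ks)) (at_left 1) (locally (zeta ks))) /\
  (forall s0 s1 : elt,
     List.Forall (fun p => n0word (snd p)) s0 ->
     List.Forall (fun p => H0word (snd p)) s1 ->
     filterlim (fun q => Zq q (n_elt s0 s1)) (at_left 1) (locally 0)).
Proof.
  split.
  - exact part1.
  - exact part2.
Qed.
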